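(* For every integer $k\ge 1$, let $\mathcal{L}^2(k)=\gcd\{\sum_{i=1}^k L_{n+i}^2 : n \ge 0\}$. Then $$\mathcal{L}^2(k) = \begin{cases} 5F_k, & \text{if $k$ is even},\\ 2, & \text{if $k \equiv 3 \pmod{6}$},\\ 1, & \text{if $k \equiv 1,5 \pmod{6}$}.\end{cases}$$
   Context: $(L_n)$ is the Lucas sequence: $L_0=2$, $L_1=1$, $L_n=L_{n-1}+L_{n-2}$; $(F_n)$ is the Fibonacci sequence: $F_0=0$, $F_1=1$, $F_n=F_{n-1}+F_{n-2}$. *)

(* Defs.v *)
From mathcomp Require Import all_boot.
Set Implicit Arguments. Unset Strict Implicit. Unset Printing Implicit Defensive.

Fixpoint fib (n : nat) : nat :=
  match n with
  | 0 => 0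
  | 1 => 1
  | (m.+1 as p).+1 => fib p + fib m
  end.

Fixpoint lucas (n : nat) : nat :=
  match n with
  | 0 => 2
  | 1 => 1
  | (m.+1 as p).+1 => lucas p + lucas m
  end.

Definition lucas_sq_sum (k n : nat) : nat := \sum_(1 <= i < k.+1) (lucas (n + i)) ^ 2.

Definition is_gcd_of_seq (f : nat -> nat) (g : nat) : Prop :=
  (forall n, g %| f n) /\ (forall d, (forall n, d %| f n) -> d %| g).

(* Main.v *)
Require Import Defs.
From mathcomp Require Import all_boot.
From mathcomp Require Import zify.

Lemma fibSS n : fib n.+2 = fib n.+1 + fib n. Proof. by []. Qed.
Lemma lucSS n : lucas n.+2 = lucas n.+1 + lucas n. Proof. by []. Qed.

Lemma lucas_fib m : lucas m.+1 = 2 * fib m + fib m.+1.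
Proof.
suff H : lucas m.+1 = 2 * fib m + fib m.+1 /\ lucas m.+2 = 2 * fib m.+1 + fib m.+2 by case: H.
elim: m => [|m [IH1 IH2]]; first by [].
split; first by [].
rewrite lucSS IH1 IH2 !fibSS; lia.
Qed.

Lemma cassF m : if odd m then fib m.+1 * fib m.+1 + 1 = fib m.+1 * fib m + fib m * fib m
  else fib m.+1 * fib m.+1 = fib m.+1 * fib m + fib m * fib m + 1.
Proof.
elim: m => [|m IH]; first by [].
rewrite /= ?fibSS; case: (odd m) IH => /= IH; lia.
Qed.

Lemma cassL m : if odd m then lucas m.+1 * lucas m.+1 = lucas m.+1 * lucas m + lucas m * lucas m + 5
  else lucas m.+1 * lucas m.+1 + 5 = lucas m.+1 * lucas m + lucas m * lucas m.
Proof.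
elim: m => [|m IH]; first by [].
rewrite /= ?lucSS; case: (odd m) IH => /= IH; lia.
Qed.

Definition P m := lucas m * lucas m.+1.

Lemma Prec m : if odd m then P m.+2 + P m + 5 = 3 * P m.+1
  else P m.+2 + P m = 3 * P m.+1 + 5.
Proof.
have := cassL m; rewrite /P (lucSS m.+1) (lucSS m).
case: (odd m) => H; lia.
Qed.

Lemma Tsum k n : lucas_sq_sum k n + P n = P (n + k).
Proof.
elim: k => [|k IH]; first by rewrite /lucas_sq_sum big_geq // addn0.
rewrite /lucas_sq_sum big_nat_recr //= -/(lucas_sq_sum k n).
rewrite -addnA [_ ^ 2 + _]addnC addnA IH addnS /P (lucSS (n + k)).
rewrite expnS expn1; lia.
Qed.

Lemma Srec k n : let S := lucas_sq_sum k in
  if ~~ odd k then S n.+2 + S n = 3 * S n.+1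
  else if odd n then S n.+2 + S n = 3 * S n.+1 + 10
  else S n.+2 + S n + 10 = 3 * S n.+1.
Proof.
move=> S.
have T0 := Tsum k n; have T1 := Tsum k n.+1; have T2 := Tsum k n.+2.
have R1 := Prec n; have R2 := Prec (n + k).
rewrite !addSn in T1 T2.
rewrite /S; rewrite oddD in R2.
case: (odd k) R2 => /=; case: (odd n) R1 => /= R1 R2; lia.
Qed.

Lemma Srec_even k n : ~~ odd k ->
  lucas_sq_sum k n.+2 + lucas_sq_sum k n = 3 * lucas_sq_sum k n.+1.
Proof. by move=> h; have := Srec k n; rewrite /= h. Qed.

Lemma Srec_odd k : odd k ->
  lucas_sq_sum k 2 + lucas_sq_sum k 0 + 10 = 3 * lucas_sq_sum k 1.
Proof. by move=> h; have := Srec k 0; rewrite /= h. Qed.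

Lemma odd_fib n : odd (fib n) = (n %% 3 != 0).
Proof.
suff H : forall n, [/\ odd (fib n) = (n %% 3 != 0), odd (fib n.+1) = (n.+1 %% 3 != 0)
   & odd (fib n.+2) = (n.+2 %% 3 != 0)] by case: (H n).
elim=> [|m [H1 H2 H3]]; first by [].
split=> //.
have -> : fib m.+3 = (fib m.+1).*2 + fib m by rewrite !fibSS -addnn; lia.
by rewrite oddD odd_double H1 -(addn3 m) modnDr.
Qed.

Lemma odd_lucas n : odd (lucas n) = (n %% 3 != 0).
Proof.
suff H : forall n, [/\ odd (lucas n) = (n %% 3 != 0), odd (lucas n.+1) = (n.+1 %% 3 != 0)
   & odd (lucas n.+2) = (n.+2 %% 3 != 0)] by case: (H n).
elim=> [|m [H1 H2 H3]]; first by [].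
split=> //.
have -> : lucas m.+3 = (lucas m.+1).*2 + lucas m by rewrite !lucSS -addnn; lia.
by rewrite oddD odd_double H1 -(addn3 m) modnDr.
Qed.

Lemma coprime_fib n : coprime (fib n) (fib n.+1).
Proof.
elim: n => [|n IH]; first by [].
by rewrite /coprime fibSS gcdnDl gcdnC.
Qed.

Lemma a1 m : m.+1 %% 2 = 1 -> m.+1 %% 3 = 0 -> m.+1 %% 6 == 3. Proof. move=> h2 h3. apply/eqP. lia. Qed.
Lemma a2 m : m.+1 %% 3 != 0 -> (m.+1 %% 3 == 1) || (m.+1 %% 3 == 2). Proof. lia. Qed.
Lemma a3 m : m.+1 %% 3 = 1 -> (m.+1 %% 3 != 0) && (m.+2 %% 3 != 0). Proof. lia. Qed.
Lemma a4 m : m.+1 %% 3 = 2 -> m.+2 %% 3 == 0. Proof. lia. Qed.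

Lemma o0 a b s : b*b = b*a + a*a + 1 -> s + 2 = (2*a+b)*(2*b+(b+a)) -> s + 4 = 5*b*(b+a). Proof. lia. Qed.
Lemma e0 a b s : b*b + 1 = b*a + a*a -> s + 2 = (2*a+b)*(2*b+(b+a)) -> s = 5*b*(b+a). Proof. lia. Qed.
Lemma e1 a b s : b*b + 1 = b*a + a*a -> s + 3 = (2*b+(b+a))*(2*(b+a)+((b+a)+b)) -> s = 5*b*(((b+a)+b)+(b+a)). Proof. lia. Qed.

Lemma lk n k : k %% 3 = 0 -> odd (lucas (n + k)) = odd (lucas n).
Proof. by move=> H; rewrite !odd_lucas -modnDmr H addn0. Qed.

Theorem theorem5p4 (k : nat) (hk : 1 <= k) :
  is_gcd_of_seq (lucas_sq_sum k)
    (if ~~ odd k then 5 * fib k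
     else if k %% 6 == 3 then 2
     else 1).
Proof.
case: k hk => [//|m] _.
have T0 : lucas_sq_sum m.+1 0 + 2 = (2*fib m + fib m.+1) * (2*fib m.+1 + fib m.+2).
  by have := Tsum m.+1 0; rewrite /P add0n !lucas_fib => <-.
have T1 : lucas_sq_sum m.+1 1 + 3 = (2*fib m.+1 + fib m.+2) * (2*fib m.+2 + fib m.+3).
  by have := Tsum m.+1 1; rewrite /P add1n !lucas_fib => <-.
set S := lucas_sq_sum m.+1 in T0 T1 *.
have C := cassF m.
have Hev : forall g, g %| S 0 -> g %| S 1 -> ~~ odd m.+1 -> forall n, g %| S n.
  move=> g h0 h1 he.
  suff H : forall n, g %| S n /\ g %| S n.+1 by move=> n; case: (H n).
  elim=> [|n [IH1 IH2]]; first by split.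
  split; first exact: IH2.
  have E := @Srec_even _ n he.
  move: IH1 IH2; rewrite /S => IH1 IH2.
  by rewrite -(dvdn_addl _ IH1) E dvdn_mull.
have [he|he] := boolP (odd m.+1).
  change (is_gcd_of_seq S (if m.+1 %% 6 == 3 then 2 else 1)).
-
  have em : odd m = false by move: he => /=; case: (odd m).
  rewrite em in C.
  have HS0 : S 0 + 4 = 5 * fib m.+1 * fib m.+2 by rewrite fibSS; rewrite !fibSS in T0; exact: o0 C T0.
  have HS1 : S 1 + 3 = lucas m.+2 * lucas m.+3.
    by rewrite T1 !lucas_fib.
  have Hd : forall d, (forall n, d %| S n) -> d %| 2.
    move=> d hd.
    have E := @Srec_odd _ he.
    have d10 : d %| 10.
      have : d %| S 2 + S 0 + 10 by rewrite E dvdn_mull.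
      by rewrite -addnA (dvdn_addr _ (hd 2)) (dvdn_addr _ (hd 0)).
    have c5 : coprime d 5.
      rewrite coprime_sym prime_coprime //; apply/negP => h5.
      have h0 : 5 %| S 0 by apply: dvdn_trans h5 (hd 0).
      have : 5 %| S 0 + 4 by rewrite HS0 -mulnA dvdn_mulr.
      by rewrite dvdn_addr.
    by move: d10; rewrite (_ : 10 = 2 * 5) // Gauss_dvdl.
  case h6: (m.+1 %% 6 == 3).
  + split; last exact: Hd.
    have h3 : m.+1 %% 3 == 0.
      by rewrite -(modn_dvdm _ (isT : 3 %| 6)) (eqP h6).
    move=> n; rewrite /S.
    have := Tsum m.+1 n; rewrite /P => E.
    rewrite dvdn2; apply/negP=> hodd.
    have : odd (lucas_sq_sum m.+1 n + lucas n * lucas n.+1) = odd (lucas (n + m.+1) * lucas (n + m.+1).+1) by rewrite E.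
    rewrite oddD hodd !oddM -addSn (@lk n _ (eqP h3)) (@lk n.+1 _ (eqP h3)).
    by case: (_ && _).
  + split=> [n|d hd]; first exact: dvd1n.
    have d2 := Hd d hd.
    have : (d == 1) || (d == 2).
      have := dvdn_leq (isT : 0 < 2) d2; move: d2; clear -d.
      by case: d => [|[|[|d]]].
    case/orP=> [/eqP->//|/eqP d2e]; exfalso.
    have h3 : m.+1 %% 3 != 0.
      apply/negP=> /eqP h3; move/negbT: h6; apply/negP; rewrite negbK.
      have h2 : m.+1 %% 2 = 1 by rewrite modn2 he.
      exact: a1.
    have hS0 := hd 0; have hS1 := hd 1; rewrite d2e in hS0 hS1.
    have : (m.+1 %% 3 == 1) || (m.+1 %% 3 == 2) by apply: a2.
    case/orP=> /eqP hm.
    * have : odd (S 0 + 4) by rewrite HS0 !oddM !odd_fib; exact: a3.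
      by rewrite oddD; move: hS0; rewrite dvdn2 => /negbTE ->.
    * have hl : odd (lucas m.+2) = false by rewrite odd_lucas; apply/negbTE; rewrite negbK; exact: a4.
      have : odd (S 1 + 3) = false by rewrite T1 -lucas_fib oddM hl.
      by rewrite oddD; move: hS1; rewrite dvdn2 => /negbTE ->.
-
  change (is_gcd_of_seq S (5 * fib m.+1)).
  have em : odd m = true by move: he => /=; case: (odd m).
  rewrite em in C.
  have HS0 : S 0 = 5 * fib m.+1 * fib m.+2 by rewrite fibSS; rewrite !fibSS in T0; exact: e0 C T0.
  have HS1 : S 1 = 5 * fib m.+1 * fib m.+4 by rewrite !fibSS; rewrite !fibSS in T1; exact: e1 C T1.
  split.
    apply: Hev => //; [rewrite HS0|rewrite HS1]; exact: dvdn_mulr.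
  move=> d hd.
  have := hd 0; have := hd 1; rewrite HS0 HS1 => h1 h0.
  have : d %| gcdn (5 * fib m.+1 * fib m.+2) (5 * fib m.+1 * fib m.+4) by rewrite dvdn_gcd h0 h1.
  rewrite -!mulnA -!muln_gcdr (fibSS m.+2) gcdnDr.
  have := coprime_fib m.+2; rewrite /coprime => /eqP ->.
  by rewrite muln1.
Qed.
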